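(* Let $K=\operatorname{cone}\{e_1,\dots,e_m\}\subset\mathbb{R}^m$ be a simplicial cone which is an isotone projection cone. Then for every $\varepsilon\in\mathcal{E}$, $K_\varepsilon$ is a $K$-isotone projection set.
   Context: $\mathbb{R}^m$ carries the standard inner product. A simplicial cone is $\operatorname{cone}\{e_1,\dots,e_m\}=\{\sum t^ie_i:t^i\ge0\}$ with $e_1,\dots,e_m$ linearly independent. $\mathcal{E}=\{\varepsilon\in\mathbb{R}^m:|\varepsilon^i|=1,\ i=1,\dots,m\}$ and $K_\varepsilon=\operatorname{cone}\{\varepsilon^1e_1,\dots,\varepsilon^me_m\}$. $x\le_K y$ means $y-x\in K$. A closed convex set $D$ is a $K$-isotone projection set if $x\le_K y$ implies $P_Dx\le_K P_Dy$, where $P_D$ is the metric projection onto $D$. A proper cone $K$ is an isotone projection cone if $K$ itself is a $K$-isotone projection set. *)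

(* Defs.v *)
From HB Require Import structures.
From mathcomp Require Import all_boot all_order all_algebra.
From mathcomp Require Import reals.
Set Implicit Arguments. Unset Strict Implicit. Unset Printing Implicit Defensive.
Import Order.TTheory GRing.Theory Num.Theory.
Local Open Scope ring_scope.

Section Defs.
Variables (R : realType) (m : nat).

Definition dotv (u v : 'rV[R]_m) : R := \sum_(i < m) u ord0 i * v ord0 i.

Definition cone_gen (g : 'I_m -> 'rV[R]_m) : 'rV[R]_m -> Prop :=
  fun x => exists t : 'I_m -> R, (forall i, 0 <= t i) /\ x = \sum_(i < m) t i *: g i.

Definition cone_le (K : 'rV[R]_m -> Prop) (x y : 'rV[R]_m) : Prop := K (y - x).

Definition is_metric_proj (D : 'rV[R]_m -> Prop) (x p : 'rV[R]_m) : Prop :=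
  D p /\ forall q, D q -> dotv (x - p) (x - p) <= dotv (x - q) (x - q).

Definition isotone_proj_set (K D : 'rV[R]_m -> Prop) : Prop :=
  forall x y px py, cone_le K x y ->
    is_metric_proj D x px -> is_metric_proj D y py -> cone_le K px py.

End Defs.

(* Main.v *)
Require Import Defs.
From HB Require Import structures.
From mathcomp Require Import all_boot all_order all_algebra.
From mathcomp Require Import reals ring lra.
Import Order.TTheory GRing.Theory Num.Theory.
Set Implicit Arguments. Unset Strict Implicit.
Local Open Scope ring_scope.

Lemma dotvC (R : realType) m (u v : 'rV[R]_m) : dotv u v = dotv v u.
Proof. by rewrite /dotv; apply: eq_bigr => i _; rewrite mulrC. Qed.

Lemma dotvDr (R : realType) m (u v w : 'rV[R]_m) : dotv u (v + w) = dotv u v + dotv u w.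
Proof. by rewrite /dotv -big_split; apply: eq_bigr => i _; rewrite mxE mulrDr. Qed.

Lemma dotvZr (R : realType) m (u v : 'rV[R]_m) a : dotv u (a *: v) = a * dotv u v.
Proof. by rewrite /dotv mulr_sumr; apply: eq_bigr => i _; rewrite mxE mulrCA. Qed.

Lemma dotv0r (R : realType) m (u : 'rV[R]_m) : dotv u 0 = 0.
Proof. by rewrite /dotv big1 // => i _; rewrite mxE mulr0. Qed.

Lemma dotvNr (R : realType) m (u v : 'rV[R]_m) : dotv u (- v) = - dotv u v.
Proof. by rewrite -scaleN1r dotvZr mulN1r. Qed.

Lemma dotvBr (R : realType) m (u v w : 'rV[R]_m) : dotv u (v - w) = dotv u v - dotv u w.
Proof. by rewrite dotvDr dotvNr. Qed.

Lemma dotv_sumr (R : realType) m (u : 'rV[R]_m) (f : 'I_m -> 'rV[R]_m) :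
  dotv u (\sum_k f k) = \sum_k dotv u (f k).
Proof.
apply: (big_ind2 (fun a b => dotv u a = b)).
- by rewrite dotv0r.
- by move=> a b c d h1 h2; rewrite dotvDr h1 h2.
- by [].
Qed.

Lemma dotvDl (R : realType) m (u v w : 'rV[R]_m) : dotv (v + w) u = dotv v u + dotv w u.
Proof. by rewrite !(dotvC _ u) dotvDr. Qed.
Lemma dotvZl (R : realType) m (u v : 'rV[R]_m) a : dotv (a *: v) u = a * dotv v u.
Proof. by rewrite !(dotvC _ u) dotvZr. Qed.
Lemma dotvNl (R : realType) m (u v : 'rV[R]_m) : dotv (- v) u = - dotv v u.
Proof. by rewrite !(dotvC _ u) dotvNr. Qed.
Lemma dotvBl (R : realType) m (u v w : 'rV[R]_m) : dotv (v - w) u = dotv v u - dotv w u.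
Proof. by rewrite !(dotvC _ u) dotvBr. Qed.
Lemma dotv_suml (R : realType) m (u : 'rV[R]_m) (f : 'I_m -> 'rV[R]_m) :
  dotv (\sum_k f k) u = \sum_k dotv (f k) u.
Proof. by rewrite dotvC dotv_sumr; apply: eq_bigr => k _; rewrite dotvC. Qed.

Lemma dotv_ge0 (R : realType) m (u : 'rV[R]_m) : 0 <= dotv u u.
Proof. by rewrite /dotv; apply: sumr_ge0 => i _; rewrite -expr2 sqr_ge0. Qed.

Lemma dotv_eq0 (R : realType) m (u : 'rV[R]_m) : dotv u u = 0 -> u = 0.
Proof.
move=> h; apply/rowP => k; rewrite mxE.
have := psumr_eq0P (P := predT) (fun i _ => sqr_ge0 (u 0 i)).
rewrite /dotv in h.
have h2 : \sum_(i < m) u 0 i ^+ 2 = 0 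
  by rewrite -[RHS]h; apply: eq_bigr => i _; rewrite expr2.
by move=> /(_ h2 k isT) /eqP; rewrite sqrf_eq0 => /eqP.
Qed.

Definition Emx (R : realType) m (e : 'I_m -> 'rV[R]_m) : 'M[R]_m := \matrix_(i<m) e i.
Definition uvec (R : realType) m (e : 'I_m -> 'rV[R]_m) (j : 'I_m) : 'rV[R]_m :=
  row j (invmx (Emx e))^T.

Lemma dotv_u (R : realType) m (e : 'I_m -> 'rV[R]_m) j q :
  dotv (uvec e j) q = (q *m invmx (Emx e)) 0 j.
Proof. by rewrite /dotv mxE; apply: eq_bigr => i _; rewrite !mxE mulrC. Qed.

Lemma expand_e (R : realType) m (e : 'I_m -> 'rV[R]_m) (hE : Emx e \in unitmx) q :
  q = \sum_k dotv (uvec e k) q *: e k.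
Proof.
rewrite -{1}(mulmxKV hE q) mulmx_sum_row; apply: eq_bigr => k _.
by rewrite dotv_u /Emx rowK.
Qed.

Lemma dot_ue (R : realType) m (e : 'I_m -> 'rV[R]_m) (hE : Emx e \in unitmx) j k :
  dotv (uvec e j) (e k) = (k == j)%:R.
Proof.
by rewrite dotv_u -(rowK (fun i => e i) k) -row_mul -/(Emx e) mulmxV // !mxE.
Qed.

Lemma sum_delta (R : realType) m (f : 'I_m -> R) j :
  \sum_k f k * (k == j)%:R = f j.
Proof.
rewrite (bigD1 j) //= eqxx mulr1 big1 ?addr0 // => k /negbTE ->.
by rewrite mulr0.
Qed.

Lemma dot_u_sum (R : realType) m (e : 'I_m -> 'rV[R]_m) (hE : Emx e \in unitmx) j c :
  dotv (uvec e j) (\sum_k c k *: e k) = c j.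
Proof.
rewrite dotv_sumr -[RHS](sum_delta c j); apply: eq_bigr => k _.
by rewrite dotvZr dot_ue.
Qed.

Lemma nondeg (R : realType) m (e : 'I_m -> 'rV[R]_m) (hE : Emx e \in unitmx) w :
  (forall j, dotv (e j) w = 0) -> w = 0.
Proof.
move=> h; apply: dotv_eq0.
rewrite {1}(expand_e hE w) dotv_suml big1 // => k _.
by rewrite dotvZl h mulr0.
Qed.

Lemma dot_eu (R : realType) m (e : 'I_m -> 'rV[R]_m) (hE : Emx e \in unitmx) j k :
  dotv (e j) (uvec e k) = (j == k)%:R.
Proof. by rewrite dotvC dot_ue. Qed.

Lemma dot_e_sum (R : realType) m (e : 'I_m -> 'rV[R]_m) (hE : Emx e \in unitmx) j c :
  dotv (e j) (\sum_k c k *: uvec e k) = c j.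
Proof.
rewrite dotv_sumr -[RHS](sum_delta c j); apply: eq_bigr => k _.
by rewrite dotvZr dot_eu // eq_sym.
Qed.

Lemma expand_u (R : realType) m (e : 'I_m -> 'rV[R]_m) (hE : Emx e \in unitmx) w :
  w = \sum_k dotv (e k) w *: uvec e k.
Proof.
apply/eqP; rewrite -subr_eq0; apply/eqP; apply: (nondeg hE) => j.
by rewrite dotvBr dot_e_sum // subrr.
Qed.

Lemma cone_e (R : realType) m (e : 'I_m -> 'rV[R]_m) (hE : Emx e \in unitmx) q :
  cone_gen e q <-> forall i, 0 <= dotv (uvec e i) q.
Proof.
split.
  by move=> [t [ht ->]] i; rewrite dot_u_sum.
move=> h; exists (fun k => dotv (uvec e k) q); split => //.
exact: expand_e.
Qed.

Lemma eps_sq (R : realType) (x : R) : `|x| = 1 -> x * x = 1.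
Proof. by move=> h; rewrite -expr2 -real_normK ?num_real // h expr1n. Qed.

Lemma cone_eps (R : realType) m (e : 'I_m -> 'rV[R]_m) (hE : Emx e \in unitmx)
  (eps : 'I_m -> R) (he : forall i, `|eps i| = 1) q :
  cone_gen (fun i => eps i *: e i) q <-> forall i, 0 <= eps i * dotv (uvec e i) q.
Proof.
split.
  move=> [t [ht ->]] i.
  have -> : \sum_k t k *: (eps k *: e k) = \sum_k (t k * eps k) *: e k.
    by apply: eq_bigr => k _; rewrite scalerA.
  by rewrite dot_u_sum // mulrCA eps_sq // mulr1.
move=> h; exists (fun k => eps k * dotv (uvec e k) q); split => //.
rewrite {1}(expand_e hE q); apply: eq_bigr => k _.
by rewrite scalerA mulrAC eps_sq // mul1r.
Qed.

Lemma dotv_sqrB (R : realType) m (a b : 'rV[R]_m) :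
  dotv (a - b) (a - b) = dotv a a + dotv b b - (dotv a b + dotv a b).
Proof.
rewrite !dotvBl !dotvBr (dotvC b a); lra.
Qed.

Lemma gram_nonpos (R : realType) m (e : 'I_m -> 'rV[R]_m) (hE : Emx e \in unitmx)
  (K_iso : isotone_proj_set (cone_gen e) (cone_gen e)) i j :
  j != i -> dotv (uvec e j) (uvec e i) <= 0.
Proof.
move=> nji.
pose u := uvec e. pose G a b := dotv (u a) (u b).
pose B := \sum_k `|G k i|.
pose w := \sum_k (if k == i then 0 else B) *: e k.
pose x := w - u i. pose y := x + G i i *: e i.
have Kc := cone_e hE.
have hB : 0 <= B by apply: sumr_ge0 => k _; exact: normr_ge0.
have hGii : 0 <= G i i by exact: dotv_ge0.
have hw k : dotv (u k) w = if k == i then 0 else B by rewrite /w dot_u_sum.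
have hy k : dotv (u k) y = dotv (u k) w - G k i + G i i * (i == k)%:R.
  by rewrite /y /x !dotvDr dotvNr dotvZr dot_ue.
have hle : cone_le (cone_gen e) x y.
  rewrite /cone_le; apply/Kc => k.
  rewrite /y addrAC subrr add0r dotvZr dot_ue //.
  by apply: mulr_ge0.
have hpx : is_metric_proj (cone_gen e) x w.
  split.
    apply/Kc => k; rewrite hw; by case: ifP.
  move=> q /Kc hq.
  have -> : x - w = - u i by rewrite /x addrAC subrr add0r.
  have -> : x - q = (w - q) - u i by rewrite /x addrAC.
  rewrite dotvNl dotvNr opprK dotv_sqrB.
  have h1 : dotv (w - q) (u i) = - dotv (u i) q.
    by rewrite dotvC dotvBr hw eqxx add0r.
  rewrite h1; have := hq i; have := dotv_ge0 (w - q); lra.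
have hpy : is_metric_proj (cone_gen e) y y.
  split.
    apply/Kc => k; rewrite hy hw; case: eqP => [->|/eqP nk].
      by rewrite eqxx mulr1 add0r addNr.
    rewrite eq_sym (negbTE nk) mulr0 addr0 subr_ge0.
    apply: le_trans (real_ler_norm (num_real _)) _.
    rewrite /B (bigD1 k) //= lerDl; apply: sumr_ge0 => ? _; exact: normr_ge0.
  move=> q _; rewrite subrr dotv0r; exact: dotv_ge0.
have := K_iso x y w y hle hpx hpy; rewrite /cone_le => /Kc /(_ j).
rewrite dotvBr hy eq_sym (negbTE nji) mulr0 addr0.
rewrite addrAC subrr add0r oppr_ge0 => h; exact h.
Qed.

Lemma small_lemma (R : realType) (c N : R) : 0 <= N ->
  (forall t, 0 < t -> t <= 1 -> 2 * t * c <= t * t * N) -> c <= 0.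
Proof.
move=> hN h; rewrite leNgt; apply/negP => hc.
pose t := c / (N + c + 1).
have hd : 0 < N + c + 1 by lra.
have ht : 0 < t by rewrite /t divr_gt0.
have ht1 : t <= 1 by rewrite /t ler_pdivrMr // mul1r; lra.
have htN : t * N <= c.
  rewrite /t mulrAC ler_pdivrMr //.
  have : 0 <= c * (c + 1) by apply: mulr_ge0; lra.
  nra.
have := h t ht ht1.
have : 2 * t * c = t * (2 * c) by rewrite mulrA (mulrC 2).
have : t * t * N = t * (t * N) by rewrite mulrA.
move=> -> ->; rewrite ler_pM2l // => h2; lra.
Qed.

Lemma pert (R : realType) m (D : 'rV[R]_m -> Prop) x p :
  is_metric_proj D x p -> forall v, D (p + v) ->
  dotv (x - p) v + dotv (x - p) v <= dotv v v.
Proof.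
move=> [_ hp] v hv; have := hp _ hv.
have -> : x - (p + v) = (x - p) - v by rewrite opprD addrA.
rewrite (dotv_sqrB (x - p) v) => h; lra.
Qed.

Lemma pert_dir (R : realType) m (D : 'rV[R]_m -> Prop) x p w :
  is_metric_proj D x p -> (forall t, 0 < t -> t <= 1 -> D (p + t *: w)) ->
  dotv (x - p) w <= 0.
Proof.
move=> hp hD; apply: (small_lemma (dotv_ge0 w)) => t t0 t1.
have := pert hp (hD t t0 t1).
rewrite dotvZr dotvZl dotvZr; lra.
Qed.

Lemma proj_props (R : realType) m (e : 'I_m -> 'rV[R]_m) (hE : Emx e \in unitmx)
  (eps : 'I_m -> R) (he : forall i, `|eps i| = 1) x p :
  is_metric_proj (cone_gen (fun i => eps i *: e i)) x p -> forall i,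
  [/\ 0 <= eps i * dotv (uvec e i) p, eps i * dotv (e i) (x - p) <= 0 &
      dotv (uvec e i) p * dotv (e i) (x - p) = 0].
Proof.
move=> hp i.
have Kc := cone_eps hE he.
have hpK : forall k, 0 <= eps k * dotv (uvec e k) p by apply/Kc; case: hp.
set a := dotv (uvec e i) p. set mu := dotv (e i) (x - p).
have hdir c : (forall t, 0 < t -> t <= 1 -> 0 <= eps i * (a + t * c)) -> c * mu <= 0.
  move=> hc; have := pert_dir (w := c *: e i) hp.
  rewrite dotvZr dotvC -/mu; apply => t t0 t1.
  apply/Kc => k; rewrite dotvDr dotvZr dotvZr dot_ue //.
  case: eqP => [<-|_]; last by rewrite mulr0 mulr0 addr0.
  by rewrite mulr1; exact: hc.
have e2 := eps_sq (he i).
have hi := hpK i; rewrite -/a in hi.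
split => //.
- apply: hdir => t t0 t1; rewrite mulrDr mulrCA e2 mulr1; lra.
- have h1 : a * mu <= 0.
    apply: hdir => t t0 t1.
    have -> : eps i * (a + t * a) = (1 + t) * (eps i * a) by ring.
    apply: mulr_ge0 => //; lra.
  have h2 : (- a) * mu <= 0.
    apply: hdir => t t0 t1.
    have -> : eps i * (a + t * - a) = (1 - t) * (eps i * a) by ring.
    apply: mulr_ge0 => //; lra.
  rewrite mulNr in h2; lra.
Qed.

Definition pp (R : realType) (a : R) := if 0 <= a then a else 0.

Lemma ppB (R : realType) (a : R) : pp a - pp (- a) = a.
Proof. rewrite /pp oppr_ge0; case: (lerP 0 a) => h; case: (lerP a 0) => h'; lra. Qed.
Lemma ppM (R : realType) (a : R) : pp a * pp (- a) = 0.
Proof.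
rewrite /pp oppr_ge0; case: (lerP 0 a) => h; case: (lerP a 0) => h';
  rewrite ?mulr0 ?mul0r //.
have -> : a = 0 by lra.
by rewrite mul0r.
Qed.
Lemma pp_ge0 (R : realType) (a : R) : 0 <= pp a.
Proof. by rewrite /pp; case: ifP. Qed.
Lemma pp_eq0 (R : realType) (a : R) : pp a = 0 -> a <= 0.
Proof. by rewrite /pp; case: (lerP 0 a) => h //; lra. Qed.
Lemma pp_gt0 (R : realType) (a : R) : pp a != 0 -> 0 < a.
Proof. by rewrite /pp; case: (lerP 0 a) => h // /eqP; lra. Qed.

Lemma eps_cases (R : realType) (x : R) : `|x| = 1 -> x = 1 \/ x = -1.
Proof.
case: (lerP 0 x) => h.
  by rewrite ger0_norm // => ->; left.
by rewrite ltr0_norm // => h1; right; rewrite -h1 opprK.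
Qed.

Lemma zero_of_prod (R : realType) (a b : R) : a * b = 0 -> b != 0 -> a = 0.
Proof. by move=> /eqP; rewrite mulf_eq0 => /orP[/eqP //|/eqP ->]; rewrite eqxx. Qed.

Theorem proposition4 (R : realType) (m : nat) (e : 'I_m -> 'rV[R]_m)
  (e_indep : row_free (\matrix_(i < m) e i))
  (K_iso : isotone_proj_set (cone_gen e) (cone_gen e))
  (eps : 'I_m -> R) (eps_sign : forall i, `|eps i| = 1) :
  isotone_proj_set (cone_gen e) (cone_gen (fun i => eps i *: e i)).
Proof.
move=> x y p p' hxy hp hp'.
have hE : Emx e \in unitmx by rewrite -row_free_unit.
have Kc := cone_e hE.
have hG := gram_nonpos hE K_iso.
move: hxy; rewrite /cone_le => /Kc hxy.
apply/Kc => i.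
have P := proj_props hE eps_sign hp.
have P' := proj_props hE eps_sign hp'.
pose u := uvec e.
pose mu k := dotv (e k) (x - p).
pose mu' k := dotv (e k) (y - p').
pose al k := dotv (u k) p.
pose al' k := dotv (u k) p'.
have hz : x - p = \sum_k mu k *: u k by exact: expand_u.
have hz' : y - p' = \sum_k mu' k *: u k by exact: expand_u.
have mono : forall k, mu k <= mu' k.
  pose D k := pp (mu k - mu' k).
  pose Dm k := pp (- (mu k - mu' k)).
  pose vD := \sum_k D k *: u k.
  pose vDm := \sum_k Dm k *: u k.
  have hdiff : (x - p) - (y - p') = vD - vDm.
    rewrite hz hz' -!sumrB; apply: eq_bigr => k _.
    by rewrite -!scalerBl /D /Dm ppB.
  have hterm k : 0 <= D k * (al k - al' k).
    have [->|nz] := eqVneq (D k) 0; first by rewrite mul0r.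
    apply: mulr_ge0; first exact: pp_ge0.
    have lt := pp_gt0 nz.
    have [a1 a2 a3] := P k. have [b1 b2 b3] := P' k.
    rewrite /al /al' /u; rewrite /mu /mu' in lt.
    case: (eps_cases (eps_sign k)) => he; rewrite he in a1 a2 b1 b2.
      rewrite mul1r in a1 a2 b1 b2.
      have -> : dotv (uvec e k) p' = 0 by apply: (zero_of_prod b3); apply/eqP; lra.
      lra.
    rewrite !mulN1r in a1 a2 b1 b2.
    have -> : dotv (uvec e k) p = 0 by apply: (zero_of_prod a3); apply/eqP; lra.
    lra.
  have h1 : 0 <= dotv vD p - dotv vD p'.
    rewrite -dotvBr /vD dotv_suml; apply: sumr_ge0 => k _.
    by rewrite dotvZl dotvBr.
  have h2 : dotv vD x - dotv vD y <= 0.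
    rewrite -dotvBr /vD dotv_suml; apply: sumr_le0 => k _.
    rewrite dotvZl; apply: mulr_ge0_le0; first exact: pp_ge0.
    have := hxy k; rewrite -/(u k) -opprB dotvNr; lra.
  have h3 : dotv vD vDm <= 0.
    rewrite /vD /vDm dotv_suml; apply: sumr_le0 => j _.
    rewrite dotvZl dotv_sumr mulr_sumr; apply: sumr_le0 => k _.
    rewrite dotvZr mulrA.
    have [<-|njk] := eqVneq j k.
      by rewrite /D /Dm ppM mul0r.
    apply: mulr_ge0_le0; first by apply: mulr_ge0; exact: pp_ge0.
    exact: (hG k j njk).
  have h4 : dotv vD ((x - p) - (y - p')) = dotv vD x - dotv vD p - (dotv vD y - dotv vD p').
    by rewrite !dotvBr.
  rewrite hdiff dotvBr in h4.
  have h5 : dotv vD vD = 0 by have := dotv_ge0 vD; lra.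
  have h6 := dotv_eq0 h5.
  move=> k; have : D k = 0 by rewrite -(dot_e_sum hE k D) -/vD h6 dotv0r.
  move/pp_eq0; lra.
rewrite dotvBr -/(al' i) -/(al i).
have [a1 a2 a3] := P i. have [b1 b2 b3] := P' i.
have := mono i; rewrite le_eqVlt => /orP[/eqP heq|hlt].
  have hs : dotv (u i) ((y - p') - (x - p)) <= 0.
    rewrite hz hz' -sumrB dotv_sumr; apply: sumr_le0 => k _.
    rewrite -scalerBl dotvZr.
    have [<-|nik] := eqVneq i k; first by rewrite heq subrr mul0r.
    apply: mulr_ge0_le0; first by have := mono k; lra.
    exact: (hG k i nik).
  have := hxy i; rewrite !dotvBr in hs *.
  rewrite /al /al' /u in hs *; move=> h; lra.
case: (eps_cases (eps_sign i)) => he; rewrite he in a1 a2 b1 b2.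
  rewrite mul1r in a1 a2 b1 b2.
  rewrite /al /al' /u; rewrite /mu /mu' in hlt.
  have -> : dotv (uvec e i) p = 0 by apply: (zero_of_prod a3); apply/eqP; lra.
  lra.
rewrite !mulN1r in a1 a2 b1 b2.
rewrite /al /al' /u; rewrite /mu /mu' in hlt.
have -> : dotv (uvec e i) p' = 0 by apply: (zero_of_prod b3); apply/eqP; lra.
lra.
Qed.
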